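(* Let $0\le t_d\le t_f$ be integers, let $f:\mathbb{F}_q^k\to\{0,1,\dots,k\}$ be the Hamming weight function $f(u)=\mathrm{wt}(u)$, and suppose there exists a systematic $[n,k,2t_d+1]$ linear code over $\mathbb{F}_q$. Then $$r_f(k,t_d,t_f)\le n-k+N(2t_f+1,2(t_f-t_d)).$$
   Context: $d(\cdot,\cdot)$ is Hamming distance and $\mathrm{wt}$ the number of nonzero entries. $N(\lambda,d)$ is the minimum length of a $q$-ary code with $\lambda$ codewords and minimum distance at least $d$ (with $N(\lambda,0)=0$). An $(f,t_d,t_f)$-FCC with redundancy $r$ is a systematic encoding $u\mapsto(u,p_u)\in\mathbb{F}_q^{k+r}$ whose images are at distance $\ge 2t_d+1$ for distinct messages and $\ge 2t_f+1$ for messages with different $f$-values; $r_f(k,t_d,t_f)$ is the minimum such $r$. *)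

(* Defs.v *)
From mathcomp Require Import all_boot all_order all_algebra all_field.
From Stdlib Require Import ClassicalDescription.
Set Implicit Arguments. Unset Strict Implicit. Unset Printing Implicit Defensive.
Import GRing.Theory.
Local Open Scope ring_scope.

Definition hdist (F : eqType) (m : nat) (x y : 'rV[F]_m) : nat :=
  #|[set i : 'I_m | x 0 i != y 0 i]|.
Definition wt (F : nzRingType) (m : nat) (x : 'rV[F]_m) : nat :=
  #|[set i : 'I_m | x 0 i != 0]|.

(* Least natural number satisfying a boolean predicate (0 if none exists;
   all predicates used below are satisfiable). *)
Definition least (P : pred nat) : nat :=
  match excluded_middle_informative (exists n, P n) with
  | left h => ex_minn h
  | right _ => 0%N
  end.

Definition code_exists (F : finFieldType) (lam d m : nat) : bool :=
  [exists C : {set 'rV[F]_m}, (#|C| == lam) &&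
     [forall x in C, forall y in C, (x != y) ==> (d <= hdist x y)%N]].

Definition Nmin (F : finFieldType) (lam d : nat) : nat :=
  if d == 0%N then 0%N else least (fun m => code_exists F lam d m).

Definition is_FCC (F : finFieldType) (k : nat) (T : eqType)
    (f : 'rV[F]_k -> T) (td tf r : nat) : bool :=
  [exists p : {ffun 'rV[F]_k -> 'rV[F]_r},
    [forall u, forall v,
      ((u != v) ==> (2 * td + 1 <= hdist (row_mx u (p u)) (row_mx v (p v)))%N)
      && ((f u != f v) ==> (2 * tf + 1 <= hdist (row_mx u (p u)) (row_mx v (p v)))%N)]].

Definition r_f (F : finFieldType) (k : nat) (T : eqType)
    (f : 'rV[F]_k -> T) (td tf : nat) : nat :=
  least (fun r => is_FCC f td tf r).

(* Main.v *)
Require Import Defs.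
From mathcomp Require Import all_boot all_order all_algebra all_field.
From mathcomp Require Import zify.
From Stdlib Require Import ClassicalDescription.
Set Implicit Arguments. Unset Strict Implicit.
Local Open Scope ring_scope.

Lemma least_le (P : pred nat) n : P n -> (least P <= n)%N.
Proof.
move=> Pn; rewrite /least; case: excluded_middle_informative => [h|h].
  by case: ex_minnP => m _ /(_ n Pn).
by [].
Qed.

Lemma leastP (P : pred nat) : (exists n, P n) -> P (least P).
Proof.
move=> ex; rewrite /least; case: excluded_middle_informative => [h|//].
by case: ex_minnP.
Qed.

Lemma card_sum (m : nat) (P : pred 'I_m) :
  #|[set i | P i]| = (\sum_(i < m) (P i : nat))%N.
Proof.
rewrite -sum1dep_card big_mkcond /=; apply: eq_bigr => i _; by case: (P i).
Qed.

Lemma hdist_row_mx (F : eqType) m1 m2 (a a' : 'rV[F]_m1) (b b' : 'rV[F]_m2) :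
  hdist (row_mx a b) (row_mx a' b') = (hdist a a' + hdist b b')%N.
Proof.
rewrite /hdist !card_sum big_split_ord /=.
congr (_ + _)%N; apply: eq_bigr => i _; by rewrite ?row_mxEl ?row_mxEr.
Qed.

Lemma hdistxx (F : eqType) m (x : 'rV[F]_m) : hdist x x = 0%N.
Proof. rewrite /hdist card_sum big1 // => i _; by rewrite eqxx. Qed.

Lemma hdistC (F : eqType) m (x y : 'rV[F]_m) : hdist x y = hdist y x.
Proof. rewrite /hdist !card_sum; apply: eq_bigr => i _; by rewrite eq_sym. Qed.

Lemma wt_le (F : nzRingType) m (u v : 'rV[F]_m) : (wt u <= wt v + hdist u v)%N.
Proof.
rewrite /wt /hdist.
have h1 : (#|[set i | u 0%R i != 0%R]| <= #|[set i | v 0%R i != 0%R] :|: [set i | u 0%R i != v 0%R i]|)%N.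
  apply: subset_leq_card; apply/subsetP => i; rewrite !inE => h.
  by rewrite -negb_and; apply: contra h => /andP [/eqP a /eqP b]; rewrite b a.
by apply: leq_trans h1 _; rewrite cardsU leq_subr.
Qed.

Definition thr (F : nzRingType) m d (i : nat) : 'rV[F]_m :=
  \row_(p < m) (if (p < i * d)%N then 1 else 0).

Lemma thr_dist (F : nzRingType) L d i j : (i < j)%N -> (j < L)%N ->
  (d <= hdist (thr F (L * d).+1 d i) (thr F (L * d).+1 d j))%N.
Proof.
move=> ij jL.
pose f := fun t : 'I_d => (inord (i * d + t) : 'I_(L * d).+1).
have lt (t : 'I_d) : (i * d + t < (L * d).+1)%N.
  have : (i.+1 * d <= L * d)%N by apply: leq_mul => //; exact: ltn_trans ij jL.
  rewrite mulSn.
  by move: (ltn_ord t); lia.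
have fv (t : 'I_d) : val (f t) = (i * d + t)%N by rewrite /f /= inordK.
have finj : injective f.
  by move=> s t /(congr1 val); rewrite !fv => /addnI /val_inj.
rewrite /hdist -{1}(card_ord d) -(card_imset (mem 'I_d) finj).
apply: subset_leq_card; apply/subsetP => x /imsetP [t _ ->].
rewrite inE !mxE fv.
have -> : (i * d + t < i * d)%N = false by lia.
have -> : (i * d + t < j * d)%N.
  have : (i.+1 * d <= j * d)%N by apply: leq_mul.
  rewrite mulSn.
  by move: (ltn_ord t); lia.
by rewrite eq_sym GRing.oner_neq0.
Qed.

Lemma code_ex (F : finFieldType) L d : (0 < d)%N -> exists m, code_exists F L d m.
Proof.
move=> d0; exists (L * d).+1.
pose c := fun i : 'I_L => thr F (L * d).+1 d i.
have cd (i j : 'I_L) : i != j -> (d <= hdist (c i) (c j))%N.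
  move=> ij; case: (ltngtP i j) => [h|h|/val_inj e]; last by rewrite e eqxx in ij.
    exact: thr_dist.
  by rewrite hdistC; apply: thr_dist.
have cinj : injective c.
  move=> i j e; apply/eqP; apply: contraT => ij.
  by move: (cd _ _ ij); rewrite e hdistxx leqNgt d0.
apply/existsP; exists [set c i | i in 'I_L].
rewrite card_imset // card_ord eqxx /=.
apply/forallP => x; apply/implyP => /imsetP [i _ ->].
apply/forallP => y; apply/implyP => /imsetP [j _ ->].
apply/implyP => ne; apply: cd; apply: contraNneq ne => ->; exact: eqxx.
Qed.

Lemma mod_far a b L : (0 < L)%N -> a != b -> a = b %[mod L] ->
  (L + a <= b \/ L + b <= a)%N.
Proof.
move=> L0 ne e.
wlog ab : a b ne e / (a <= b)%N.
  move=> W; case: (leqP a b) => h; first exact: W.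
  case: (W b a) => //; [by rewrite eq_sym|by apply: ltnW|by right|by left].
left; have : (L %| b - a)%N by rewrite -eqn_mod_dvd // e.
move=> /dvdn_leq; have : (0 < b - a)%N by move: ne ab; rewrite neq_ltn; lia.
move=> h /(_ h); lia.
Qed.

Lemma arith L a b h : (a <= b + h)%N -> (b <= a + h)%N ->
  (L + a <= b \/ L + b <= a)%N -> (L <= h)%N.
Proof. lia. Qed.

Lemma hL_lemma (F : finFieldType) k (u v : 'rV[F]_k) L : (0 < L)%N ->
  wt u != wt v -> wt u = wt v %[mod L] -> (L <= hdist u v)%N.
Proof.
move=> L0 ne e.
apply: (@arith L (wt u) (wt v)); first exact: wt_le.
  by rewrite hdistC; apply: wt_le.
exact: (mod_far L0 ne e).
Qed.

Theorem lemma9 (F : finFieldType) (k n td tf : nat) :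
  (td <= tf)%N -> (k <= n)%N ->
  (exists P : 'M[F]_(k, n - k),
     forall u v : 'rV[F]_k, u != v ->
       (2 * td + 1 <= hdist (row_mx u (u *m P)) (row_mx v (v *m P)))%N) ->
  (r_f (fun u : 'rV[F]_k => wt u) td tf
     <= n - k + Nmin F (2 * tf + 1) (2 * (tf - td)))%N.
Proof.
move=> tdf kn [P HP].
set L := (2 * tf + 1)%N; set d := (2 * (tf - td))%N; set m := Nmin F L d.
have [c Hc] : exists c : nat -> 'rV[F]_m, forall i j, (i < L)%N -> (j < L)%N ->
    i != j -> (d <= hdist (c i) (c j))%N.
  rewrite /m /Nmin; case: eqP => [->|/eqP d0]; last rewrite -lt0n in d0.
    by exists (fun _ => 0) => *.
  have := @leastP (code_exists F L d) (code_ex F L d0).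
  set m' := least _ => /existsP [C /andP [/eqP cC /forallP HC]].
  exists (fun i => nth 0 (enum C) i) => i j iL jL ij.
  have sz : size (enum C) = L by rewrite -cardE.
  have xi : nth 0 (enum C) i \in C by rewrite -mem_enum mem_nth ?sz.
  have xj : nth 0 (enum C) j \in C by rewrite -mem_enum mem_nth ?sz.
  have := HC (nth 0 (enum C) i); rewrite xi /= => /forallP /(_ (nth 0 (enum C) j)).
  rewrite xj /= => /implyP; apply.
  by rewrite nth_uniq ?sz ?enum_uniq.
apply: least_le.
apply/existsP; exists [ffun u => row_mx (u *m P) (c (wt u %% L)%N)].
apply/forallP => u; apply/forallP => v; rewrite !ffunE.
rewrite !hdist_row_mx.
apply/andP; split; apply/implyP => ne.
  rewrite addnA; apply: leq_trans _ (leq_addr _ _).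
  by have := HP _ _ ne; rewrite hdist_row_mx.
have uv : u != v by apply: contraNneq ne => ->.
have L0 : (0 < L)%N by rewrite /L addn1.
case: (boolP ((wt u %% L)%N == (wt v %% L)%N)) => [/eqP e|e].
  have hL : (L <= hdist u v)%N.
    exact: hL_lemma L0 ne e.
  by apply: leq_trans hL (leq_addr _ _).
have H1 := HP _ _ uv; rewrite hdist_row_mx in H1.
have H2 := Hc _ _ (ltn_pmod (wt u) L0) (ltn_pmod (wt v) L0) e.
rewrite addnA; apply: leq_trans (leq_add H1 H2).
rewrite /d /L; lia.
Qed.
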